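(* For any $\alpha\in[0,1/2)$, if a deterministic algorithm for the $\{0,1\}$-speed SSP problem is $(1+\alpha)$-consistent, then its robustness is at least $(4-2\alpha)/3$.
   Context: $\{0,1\}$-speed SSP: there are $n$ jobs with processing times $p_1,\dots,p_n\ge0$ and $m$ machines, each of speed $0$ (unavailable) or $1$ (available). In the partitioning stage the algorithm knows $\mathbf p$, $m$ and a prediction $\hat m$ of the number of available machines, and partitions the jobs into $m$ possibly empty bags. In the scheduling stage the actual number $m_0\ge1$ of available machines is revealed and each bag is assigned whole to one of the $m_0$ identical unit-speed machines; the makespan is the maximum total processing time on a machine. $opt(\mathbf p,x)$ is the minimum makespan of scheduling the individual jobs on $x$ identical unit-speed machines; $alg(\mathbf p,\hat m,m_0)$ is the algorithm's makespan. An algorithm is $c$-consistent if $alg(\mathbf p,m_0,m_0)\le c\cdot opt(\mathbf p,m_0)$ for all $\mathbf p,m_0$; its robustness is $\sup_{\mathbf p,\hat m,m_0} alg(\mathbf p,\hat m,m_0)/opt(\mathbf p,m_0)$. *)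

(* Defs.v *)
From HB Require Import structures.
From mathcomp Require Import all_boot all_order all_algebra.
From mathcomp Require Import reals.
Set Implicit Arguments. Unset Strict Implicit. Unset Printing Implicit Defensive.
Import Order.TTheory GRing.Theory Num.Theory.
Local Open Scope ring_scope.

(* To avoid empty index types, machine counts are written as successors:
   a count written [m.+1] means m+1 >= 1 machines. *)

Section SSP.
Variable R : realType.

Definition load n k (p : 'I_n -> R) (f : 'I_n -> 'I_k) (j : 'I_k) : R :=
  \sum_(i < n | f i == j) p i.

(* makespan of an assignment of jobs to k machines (loads are >= 0 when p >= 0) *)
Definition makespan n k (p : 'I_n -> R) (f : 'I_n -> 'I_k) : R :=
  \big[Order.max/0]_(j < k) load p f j.

(* The seed \sum_i p i is an upper bound on
   every makespan (for p >= 0), so it does not affect the minimum when k >= 1. *)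
Definition opt n k (p : 'I_n -> R) : R :=
  \big[Order.min/(\sum_(i < n) p i)]_(f : {ffun 'I_n -> 'I_k}) makespan p f.

(* A deterministic algorithm.
   - [part n m p mh] : the partitioning stage for n jobs with times p, m.+1 machines,
     prediction mh; it assigns each job to one of the m.+1 bags.
   - [sched n m p mh bags k] : the scheduling stage, after k.+1 available machines
     are revealed; it maps each bag (whole) to one of the k.+1 available machines.
     It may use everything known (p, m, mh and the bags). *)
Record algorithm := Algorithm {
  part : forall n m : nat, ('I_n -> R) -> nat -> 'I_n -> 'I_m.+1;
  sched : forall n m : nat, ('I_n -> R) -> nat -> ('I_n -> 'I_m.+1) ->
          forall k : nat, 'I_m.+1 -> 'I_k.+1
}.

(* alg(p, mh, m0) with m.+1 machines and m0 = k.+1 available machines *)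
Definition alg (A : algorithm) n m (p : 'I_n -> R) (mh : nat) (k : nat) : R :=
  let bags := part A m p mh in
  makespan p (fun i => sched A p mh bags k (bags i)).

Definition consistent (A : algorithm) (c : R) : Prop :=
  forall n m (p : 'I_n -> R), (forall i, 0 <= p i) ->
  forall k : nat, (k <= m)%N -> alg A m p k.+1 k <= c * opt k.+1 p.

(* robustness >= c, i.e. sup_{p, mh, m0} alg/opt >= c: every r < c is exceeded *)
Definition robustness_ge (A : algorithm) (c : R) : Prop :=
  forall r : R, r < c ->
  exists n m (p : 'I_n -> R) (mh k : nat),
    [/\ (forall i, 0 <= p i), (1 <= mh <= m.+1)%N, (k <= m)%N &
        r * opt k.+1 p < alg A m p mh k].

End SSP.

(* Main.v *)
Require Import Defs.
From HB Require Import structures.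
From mathcomp Require Import all_boot all_order all_algebra.
From mathcomp Require Import reals.
From mathcomp Require Import lra zify.
Import Order.TTheory GRing.Theory Num.Theory.
Local Open Scope ring_scope.

Section Helpers.
Variable R : realType.

Lemma load_ge n k (p : 'I_n -> R) (f : 'I_n -> 'I_k) (t : 'I_k) (P : pred 'I_n) :
  (forall i, 0 <= p i) -> (forall i, P i -> f i == t) ->
  \sum_(i < n | P i) p i <= load p f t.
Proof.
move=> p0 H; rewrite /load [X in _ <= X]big_mkcond [X in X <= _]big_mkcond /=.
apply: ler_sum => i _; case: ifP => Pi; first by rewrite H.
by case: ifP.
Qed.

Lemma maxl (x y : R) : x <= Order.max x y.
Proof. rewrite /Order.max; case: ifP => [H|_]; [exact: ltW | exact: lexx]. Qed.
Lemma maxr (x y : R) : y <= Order.max x y.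
Proof. rewrite /Order.max; case: ifP => [_|/negbT]; first exact: lexx. by rewrite -leNgt. Qed.
Lemma max_lub (x y c : R) : x <= c -> y <= c -> Order.max x y <= c.
Proof. by rewrite /Order.max; case: ifP. Qed.
Lemma minl (x y : R) : Order.min x y <= x.
Proof. rewrite /Order.min; case: ifP => [H|/negbT]; [exact: lexx | by rewrite leNgt].  Qed.
Lemma min_glb (x y c : R) : c <= x -> c <= y -> c <= Order.min x y.
Proof. by rewrite /Order.min; case: ifP. Qed.

Lemma makespan_ge n k (p : 'I_n -> R) (f : 'I_n -> 'I_k) (t : 'I_k) :
  load p f t <= makespan p f.
Proof. rewrite /makespan (bigD1 t) //=; exact: maxl. Qed.

Lemma makespan_le n k (p : 'I_n -> R) (f : 'I_n -> 'I_k) (c : R) :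
  0 <= c -> (forall t, load p f t <= c) -> makespan p f <= c.
Proof.
move=> c0 H; rewrite /makespan; elim/big_ind: _ => //.
by move=> x y hx hy; apply: max_lub.
Qed.

Lemma makespan_ge0 n k (p : 'I_n -> R) (f : 'I_n -> 'I_k) : 0 <= makespan p f.
Proof.
rewrite /makespan; elim/big_rec: _ => // j x _ hx.
exact: le_trans hx (maxr _ _).
Qed.

Lemma opt_le n k (p : 'I_n -> R) (f : {ffun 'I_n -> 'I_k}) :
  opt k p <= makespan p f.
Proof. rewrite /opt (bigD1 f) //=; exact: minl. Qed.

Lemma opt_ge0 n k (p : 'I_n -> R) : (forall i, 0 <= p i) -> 0 <= opt k p.
Proof.
move=> p0; rewrite /opt; elim/big_ind: _.
- by apply: sumr_ge0.
- by move=> x y hx hy; apply: min_glb.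
- by move=> f _; apply: makespan_ge0.
Qed.

End Helpers.

Definition p6 (R : realType) : 'I_6 -> R := fun _ => 1.

Lemma opt3 (R : realType) : opt 3 (p6 R) <= 2.
Proof.
pose f : {ffun 'I_6 -> 'I_3} := [ffun i : 'I_6 => inord (i %/ 2)].
apply: (le_trans (@opt_le R _ _ (p6 R) f)); apply: (@makespan_le R)
 => // t.
rewrite /load /p6 big_mkcond !big_ord_recr big_ord0 /= !ffunE.
case: t => [[|[|[|t]]] Ht] //=; rewrite -!val_eqE /= !inordK //=; lra.
Qed.

Lemma opt2 (R : realType) : opt 2 (p6 R) <= 3.
Proof.
pose f : {ffun 'I_6 -> 'I_2} := [ffun i : 'I_6 => inord (i %/ 3)].
apply: (le_trans (@opt_le R _ _ (p6 R) f)); apply: (@makespan_le R) => // t.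
rewrite /load /p6 big_mkcond !big_ord_recr big_ord0 /= !ffunE.
case: t => [[|[|t]] Ht] //=; rewrite -!val_eqE /= !inordK //=; lra.
Qed.


Lemma I3_cases (j : 'I_3) :
  j = @Ordinal 3 0 isT \/ j = @Ordinal 3 1 isT \/ j = @Ordinal 3 2 isT.
Proof.
case: j => [[|[|[|j]]] Hj]; [left|right;left|right;right|done]; exact: val_inj.
Qed.

Lemma pigeon (h : 'I_3 -> 'I_2) : exists j1 j3 : 'I_3,
  forall j, j != j3 -> h j == h j1.
Proof.
set o0 := @Ordinal 3 0 isT; set o1 := @Ordinal 3 1 isT; set o2 := @Ordinal 3 2 isT.
case E01: (h o0 == h o1).
  exists o0, o2 => j; case: (I3_cases j) => [->|[->|->]] H.
  - exact: eqxx.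
  - by rewrite eq_sym E01.
  - by rewrite eqxx in H.
case E02: (h o0 == h o2).
  exists o0, o1 => j; case: (I3_cases j) => [->|[->|->]] H.
  - exact: eqxx.
  - by rewrite eqxx in H.
  - by rewrite eq_sym E02.
exists o1, o0 => j; case: (I3_cases j) => [->|[->|->]] H.
  - by rewrite eqxx in H.
  - exact: eqxx.
 have := ltn_ord (h o0); have := ltn_ord (h o1); have := ltn_ord (h o2).
move: E01 E02; rewrite -!val_eqE /= => /negbT E01 /negbT E02 a b c; apply/eqP; move/eqP: E01; move/eqP: E02. rewrite /o0 /o1 /o2 in a b c *. lia.
Qed.

Theorem theorem6 (R : realType) (alpha : R) (A : algorithm R) :
  0 <= alpha -> alpha < 1 / 2 ->
  consistent A (1 + alpha) ->
  robustness_ge A ((4 - 2 * alpha) / 3).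
Proof.
move=> a0 ahalf Hc r Hr.
have p0 : forall i, 0 <= p6 R i by move=> i; rewrite /p6 ler01.
exists 6%N, 2%N, (p6 R), 3%N, 1%N; split => //.
have Hcons := Hc 6%N 2%N (p6 R) p0 2%N (leqnn 2).
move: Hcons; rewrite /alg.
set b := part A 2 (p6 R) 3.
set g := sched A (p6 R) 3 b 2.
set h := sched A (p6 R) 3 b 1.
move=> Hcons.
have Hbag : forall j, \sum_(i < 6 | b i == j) p6 R i <= 2 + 2 * alpha.
  move=> j.
  apply: (le_trans (@load_ge R _ _ (p6 R) (fun i => g (b i)) (g j) (fun i => b i == j) p0 _)).
    by move=> i /eqP ->.
  apply: (le_trans (@makespan_ge R _ _ _ _ _)).
  apply: (le_trans Hcons).
  have := opt3 R; have := @opt_ge0 R 6 3 (p6 R) p0; nra.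
have [j1 [j3 Hj]] := pigeon h.
have Hload : \sum_(i < 6 | b i != j3) p6 R i <= makespan (p6 R) (fun i => h (b i)).
  apply: (le_trans (@load_ge R _ _ (p6 R) (fun i => h (b i)) (h j1) (fun i => b i != j3) p0 _)).
    by move=> i /Hj.
  exact: (@makespan_ge R _ _ _ _ _).
have Htot : \sum_(i < 6) p6 R i = 6%:R by rewrite /p6 sumr_const card_ord.
have Hsplit : (6%:R : R) = \sum_(i < 6 | b i == j3) p6 R i + \sum_(i < 6 | b i != j3) p6 R i.
  by rewrite -Htot (bigID (fun i => b i == j3)) /=.
have := Hbag j3; have := opt2 R; have := @opt_ge0 R 6 2 (p6 R) p0.
move: Hsplit Hload.
set X := \sum_(i < 6 | b i != j3) p6 R i.
set Y := \sum_(i < 6 | b i == j3) p6 R i.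
set M := makespan _ _. set O := opt 2 _.
move=> H1 H2 H3 H4 H5; case: (lerP 0 r) => r0.
  have : r * O <= r * 3 by apply: ler_wpM2l. lra.
have : r * O <= 0 by apply: mulr_le0_ge0 (ltW r0) H3. lra.
Qed.
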